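(* Let $g:\{0,1,2,3\}^*\to\{0,1,2,3\}^*$ be the morphism $g(0)=01$, $g(1)=20$, $g(2)=23$, $g(3)=02$, and $\tau$ the coding $\tau(0)=2$, $\tau(1)=1$, $\tau(2)=0$, $\tau(3)=1$; let $\mathbf{vtm}=\tau(g^\omega(0))$, an infinite word over $\{0,1,2\}$. Let $\Delta$ be a finite alphabet and $h:\{0,1,2\}^*\to\Delta^*$ a morphism such that $h(0),h(1),h(2)$ are not all empty. If the three lengths $|h(0)|,|h(1)|,|h(2)|$ form an arithmetic progression, then the infinite word $h(\mathbf{vtm})$ is $2$-automatic.
   Context: $g^\omega(0)$ denotes the infinite fixed point of $g$ starting with $0$. An infinite word $(a_n)_{n\ge0}$ is $2$-automatic if there is a deterministic finite automaton with output that, on input the base-$2$ representation of $n$ (most significant digit first), outputs $a_n$; equivalently, it is the image under a coding of a fixed point of a $2$-uniform morphism. *)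

(* Defs.v *)
From mathcomp Require Import all_boot.
Set Implicit Arguments. Unset Strict Implicit. Unset Printing Implicit Defensive.

Definition word_morph (A B : Type) (f : A -> seq B) (w : seq A) : seq B :=
  flatten (map f w).

Definition L4 (i : nat) (Hi : i < 4) : 'I_4 := Ordinal Hi.
Definition L3 (i : nat) (Hi : i < 3) : 'I_3 := Ordinal Hi.

Definition g_img (a : 'I_4) : seq 'I_4 :=
  match val a with
  | 0 => [:: @L4 0 isT; @L4 1 isT]
  | 1 => [:: @L4 2 isT; @L4 0 isT]
  | 2 => [:: @L4 2 isT; @L4 3 isT]
  | _ => [:: @L4 0 isT; @L4 2 isT]
  end.

(* g^omega(0): the n-th letter is the n-th letter of g^(n+1)(0)
   (which has length 2^(n+1) > n, and each g^k(0) is a prefix of g^(k+1)(0)). *)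
Definition g_omega0 (n : nat) : 'I_4 :=
  nth ord0 (iter n.+1 (word_morph g_img) [:: ord0]) n.

Definition tau (a : 'I_4) : 'I_3 :=
  match val a with
  | 0 => @L3 2 isT
  | 1 => @L3 1 isT
  | 2 => @L3 0 isT
  | _ => @L3 1 isT
  end.

Definition vtm (n : nat) : 'I_3 := tau (g_omega0 n).

(* y is the image h(x) of the infinite word x under the morphism h:
   every finite word h(x_0 ... x_{k-1}) is a prefix of y. *)
Definition is_morph_image (A B : Type) (h : A -> seq B) (x : nat -> A)
    (y : nat -> B) : Prop :=
  forall k n, n < size (word_morph h (mkseq x k)) ->
    y n = nth (y n) (word_morph h (mkseq x k)) n.

(* Canonical base-2 representation, most significant digit first
   (0 is represented by the empty word). *)
Fixpoint bin_aux (fuel n : nat) : seq 'I_2 :=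
  match fuel with
  | 0 => [::]
  | f.+1 => if n is 0 then [::] else rcons (bin_aux f n./2) (if odd n then ord_max else ord0)
  end.
Definition base2 (n : nat) : seq 'I_2 := bin_aux n n.

Definition automatic2 (D : Type) (y : nat -> D) : Prop :=
  exists (Q : finType) (q0 : Q) (delta : Q -> 'I_2 -> Q) (out : Q -> D),
    forall n, y n = out (foldl delta q0 (base2 n)).

(* Main.v *)
Require Import Defs.
From mathcomp Require Import all_boot zify.
From Stdlib Require Import ClassicalEpsilon.
Set Implicit Arguments. Unset Strict Implicit. Unset Printing Implicit Defensive.

Lemma wm_cat (A B : Type) (f : A -> seq B) s1 s2 :
  word_morph f (s1 ++ s2) = word_morph f s1 ++ word_morph f s2.
Proof. by rewrite /word_morph map_cat flatten_cat. Qed.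

Lemma wm_cons (A B : Type) (f : A -> seq B) a s :
  word_morph f (a :: s) = f a ++ word_morph f s.
Proof. by []. Qed.

Lemma size_g_img a : size (g_img a) = 2.
Proof. by rewrite /g_img; case: (val a) => [|[|[|]]]. Qed.

Lemma size_wm_g s : size (word_morph g_img s) = 2 * size s.
Proof. elim: s => [|a s IH] //=; rewrite wm_cons size_cat IH size_g_img; lia. Qed.

Definition G j := iter j (word_morph g_img) [:: ord0].

Lemma G_S j : G j.+1 = word_morph g_img (G j).
Proof. by []. Qed.

Lemma size_G j : size (G j) = 2 ^ j.
Proof. elim: j => [|j IH] //; by rewrite G_S size_wm_g IH expnS. Qed.

Lemma G_step j : exists s, G j.+1 = G j ++ s.
Proof.
elim: j => [|j [s IH]].
  by exists [:: @L4 1 isT]; apply/eqP.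
exists (word_morph g_img s). by rewrite G_S {1}IH wm_cat -G_S.
Qed.

Lemma G_prefix i j : i <= j -> exists s, G j = G i ++ s.
Proof.
move=> /subnK <-; elim: (j - i) => [|k [s IH]]; first by exists [::]; rewrite cats0.
have [s' E] := G_step (k + i). exists (s ++ s'). by rewrite addSn E IH catA.
Qed.

Lemma nth_G_eq n i j : n < 2 ^ i -> n < 2 ^ j -> nth ord0 (G i) n = nth ord0 (G j) n.
Proof.
wlog le: i j / i <= j.
  move=> W Hi Hj; case/orP: (leq_total i j) => H; first exact: W.
  by symmetry; apply: W.
move=> Hi _; have [s ->] := G_prefix le. by rewrite nth_cat size_G Hi.
Qed.

Lemma nth_G n j : n < 2 ^ j -> nth ord0 (G j) n = g_omega0 n.
Proof.
move=> H; rewrite /g_omega0 -/(G n.+1); apply: nth_G_eq => //.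
apply: (leq_trans (ltn_expl n (isT : 1 < 2))). by rewrite leq_exp2l.
Qed.

Lemma nth_wm2 s k c : c < 2 -> k < size s ->
  nth ord0 (word_morph g_img s) (2 * k + c) = nth ord0 (g_img (nth ord0 s k)) c.
Proof.
move=> Hc; elim: s k => [|a s IH] [|k] //= Hk.
  by rewrite wm_cons nth_cat size_g_img add0n Hc.
rewrite wm_cons nth_cat size_g_img.
have -> : (2 * k.+1 + c < 2) = false by lia.
have -> : 2 * k.+1 + c - 2 = 2 * k + c by lia.
exact: IH.
Qed.

Lemma x_double k c : c < 2 -> g_omega0 (2 * k + c) = nth ord0 (g_img (g_omega0 k)) c.
Proof.
move=> Hc. have Hk := ltn_expl k (isT : 1 < 2).
rewrite -(nth_G (j := k.+1)); last by rewrite expnS; lia.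
rewrite -(nth_G Hk) G_S nth_wm2 // size_G //.
Qed.

Lemma x0 : g_omega0 0 = ord0.
Proof. by apply/val_inj. Qed.

Definition tm n : bool := (val (g_omega0 n) == 1) || (val (g_omega0 n) == 2).

Lemma tm_double k c : c < 2 -> tm (2 * k + c) = (c == 1) (+) tm k.
Proof.
move=> Hc; rewrite /tm x_double //.
case: (g_omega0 k) => [[|[|[|[|?]]]] Hk] //=; by case: c Hc => [|[|]].
Qed.

Lemma tm_succ m : tm m.+1 = (val (g_omega0 m) == 0) || (val (g_omega0 m) == 1).
Proof.
elim/ltn_ind: m => m IH.
case/boolP: (odd m) => Hm.
- have E : m = 2 * m./2 + 1 by rewrite -[m in LHS](odd_double_half m) Hm; lia.
  have E2 : m.+1 = 2 * (m./2).+1 + 0 by lia.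
  rewrite E2 tm_double // IH; last by lia.
  rewrite [in g_omega0 m]E x_double //=.
  case: (g_omega0 m./2) => [[|[|[|[|?]]]] Hk] //=.
- have E : m = 2 * m./2 + 0 by rewrite -[m in LHS](odd_double_half m) (negbTE Hm); lia.
  have E2 : m.+1 = 2 * m./2 + 1 by lia.
  rewrite E2 /tm x_double // [in g_omega0 m]E x_double //.
  case: (g_omega0 m./2) => [[|[|[|[|?]]]] Hk] //=.
Qed.

Definition code (b1 b2 : bool) : 'I_3 :=
  match b1, b2 with
  | false, true => @L3 2 isT
  | true, false => @L3 0 isT
  | _, _ => @L3 1 isT
  end.

Lemma vtm_code m : vtm m = code (tm m) (tm m.+1).
Proof.
rewrite tm_succ /vtm /tm.
case: (g_omega0 m) => [[|[|[|[|?]]]] Hk] //=.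
Qed.

Lemma mkseq_split (T : Type) (f : nat -> T) m k : m < k ->
  exists rest, mkseq f k = mkseq f m ++ f m :: rest.
Proof.
move=> /subnK <-; elim: (k - m.+1) => [|r [rest IH]].
  by exists [::]; rewrite add0n mkseqS cats1.
exists (rcons rest (f (r + m.+1))). by rewrite addSn mkseqS IH rcons_cat rcons_cons.
Qed.

Section Main.
Variables (Delta : finType) (h : 'I_3 -> seq Delta).
Local Notation s0 := (size (h (@L3 0 isT))).
Local Notation s1 := (size (h (@L3 1 isT))).
Local Notation s2 := (size (h (@L3 2 isT))).
Hypothesis hAP : s0 + s2 = 2 * s1.

Definition P m := size (word_morph h (mkseq vtm m)).

Lemma P_S m : P m.+1 = P m + size (h (vtm m)).
Proof. by rewrite /P mkseqS -cats1 wm_cat size_cat /word_morph /= cats0. Qed.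

Lemma P_form m : P m + s0 * tm m = s1 * (m + tm m).
Proof.
elim: m => [|m IH].
  rewrite /tm x0 /P /=; lia.
rewrite P_S vtm_code.
case: (tm m) IH; case: (tm m.+1) => /= IH; lia.
Qed.

Lemma P_mono i j : i <= j -> P i <= P j.
Proof.
move=> /subnK <-; elim: (j - i) => [|k IH] //.
by rewrite addSn P_S (leq_trans IH) // leq_addr.
Qed.

Lemma P_lb m : s1 * m <= P m + s1.
Proof. have := P_form m; case: (tm m) => /=; lia. Qed.

Lemma P_ub m : P m <= s1 * m + s1.
Proof. have := P_form m; case: (tm m) => /=; lia. Qed.

Hypothesis a_pos : 0 < s1.

Lemma P_unb n : n < P n.+2.
Proof. have := P_lb n.+2; nia. Qed.

Definition M n := ex_minn (ex_intro (fun m => n < P m.+1) n.+1 (P_unb n)).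

Lemma M_spec n : P (M n) <= n < P (M n).+1.
Proof.
rewrite /M; case: ex_minnP => m -> Hmin; rewrite andbT.
case: m Hmin => [|m] Hmin; first by rewrite /P.
rewrite leqNgt; apply/negP => /Hmin; lia.
Qed.

Lemma M_uniq n m : P m <= n < P m.+1 -> M n = m.
Proof.
move=> /andP [H1 H2]; have /andP [H3 H4] := M_spec n.
apply/eqP; rewrite eqn_leq; apply/andP; split.
  rewrite leqNgt; apply/negP => H.
  have := P_mono H; lia.
rewrite leqNgt; apply/negP => H.
have := P_mono H; lia.
Qed.

Lemma nth_wm n k d : n < P k ->
  nth d (word_morph h (mkseq vtm k)) n = nth d (h (vtm (M n))) (n - P (M n)).
Proof.
move=> Hk; have /andP [H1 H2] := M_spec n.
have Mk : M n < k.
  rewrite ltnNge; apply/negP => H; have := P_mono H; lia.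
have [rest E] := mkseq_split vtm Mk.
rewrite E wm_cat wm_cons nth_cat -/(P (M n)) ltnNge H1 /= nth_cat.
by rewrite -(ltn_add2l (P (M n))) subnKC // -P_S H2.
Qed.

End Main.

Lemma bin_aux_fuel f1 f2 n : n <= f1 -> n <= f2 -> bin_aux f1 n = bin_aux f2 n.
Proof.
elim: f1 f2 n => [|f1 IH] [|f2] [|n] //= H1 H2.
rewrite (IH f2) //; rewrite leq_uphalf_double; lia.
Qed.

Lemma base2S n : 0 < n ->
  base2 n = rcons (base2 n./2) (if odd n then ord_max else ord0).
Proof.
case: n => [|n] // _; rewrite /base2 /= (bin_aux_fuel (f2 := uphalf n)) //.
rewrite leq_uphalf_double; lia.
Qed.

Lemma W_upd q k : k <= 4 ->
  (if 1 <= 2 * q + k then Some (tm (2 * q + k - 1)) else None) =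
  omap (addb (~~ odd k)) (if 1 <= q + (k.+1)./2 then Some (tm (q + (k.+1)./2 - 1)) else None).
Proof.
move=> Hk; case: k Hk => [|[|[|[|[|k]]]]] Hk; last by exfalso; lia.
- change (1./2) with 0; change (~~ odd 0) with true.
  case: q => [|q]. reflexivity.
  rewrite (_ : 0 < 2 * q.+1 + 0); last by lia.
  rewrite (_ : 0 < q.+1 + 0); last by lia.
  rewrite (_ : 2 * q.+1 + 0 - 1 = 2 * q + 1); last by lia.
  rewrite tm_double; last by [].
  rewrite (_ : q.+1 + 0 - 1 = q); last by lia.
  reflexivity.
- change (2./2) with 1; change (~~ odd 1) with false.
  rewrite (_ : 0 < 2 * q + 1); last by lia.
  rewrite (_ : 0 < q + 1); last by lia.
  rewrite (_ : 2 * q + 1 - 1 = 2 * q + 0); last by lia.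
  rewrite tm_double; last by [].
  rewrite (_ : q + 1 - 1 = q); last by lia.
  reflexivity.
- change (3./2) with 1; change (~~ odd 2) with true.
  rewrite (_ : 0 < 2 * q + 2); last by lia.
  rewrite (_ : 0 < q + 1); last by lia.
  rewrite (_ : 2 * q + 2 - 1 = 2 * q + 1); last by lia.
  rewrite tm_double; last by [].
  rewrite (_ : q + 1 - 1 = q); last by lia.
  reflexivity.
- change (4./2) with 2; change (~~ odd 3) with false.
  rewrite (_ : 0 < 2 * q + 3); last by lia.
  rewrite (_ : 0 < q + 2); last by lia.
  rewrite (_ : 2 * q + 3 - 1 = 2 * q.+1 + 0); last by lia.
  rewrite tm_double; last by [].
  rewrite (_ : q + 2 - 1 = q.+1); last by lia.
  reflexivity.
- change (5./2) with 2; change (~~ odd 4) with true.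
  rewrite (_ : 0 < 2 * q + 4); last by lia.
  rewrite (_ : 0 < q + 2); last by lia.
  rewrite (_ : 2 * q + 4 - 1 = 2 * q.+1 + 1); last by lia.
  rewrite tm_double; last by [].
  rewrite (_ : q + 2 - 1 = q.+1); last by lia.
  reflexivity.
Qed.

Section Auto.
Variables (Delta : finType) (h : 'I_3 -> seq Delta).
Local Notation s0 := (size (h (@L3 0 isT))).
Local Notation s1 := (size (h (@L3 1 isT))).
Local Notation s2 := (size (h (@L3 2 isT))).
Hypothesis hAP : s0 + s2 = 2 * s1.
Hypothesis a_pos : 0 < s1.
Variable d0 : Delta.

Local Notation MM := (M hAP a_pos).
Local Notation PP := (P h).

Definition Y n := nth d0 (h (vtm (MM n))) (n - PP (MM n)).

Definition St n : 'I_s1.+1 * {ffun 'I_4 -> option bool} :=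
  (inord (n %% s1),
   [ffun j : 'I_4 => if 1 <= n %/ s1 + j then Some (tm (n %/ s1 + j - 1)) else None]).

Lemma St_inv n1 n2 : St n1 = St n2 -> n1 %% s1 = n2 %% s1 /\
  forall j, j < 4 ->
  (if 1 <= n1 %/ s1 + j then Some (tm (n1 %/ s1 + j - 1)) else None) =
  (if 1 <= n2 %/ s1 + j then Some (tm (n2 %/ s1 + j - 1)) else None).
Proof.
move=> E; split.
  have := congr1 (fun s => val s.1) E; rewrite /= !inordK //.
  - exact: (leq_trans (ltn_pmod _ a_pos) (leqnSn _)).
  - exact: (leq_trans (ltn_pmod _ a_pos) (leqnSn _)).
move=> j Hj; have := congr1 (fun s => fun_of_fin s.2 (Ordinal Hj)) E; rewrite !ffunE.
move=> H; exact H.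
Qed.

Lemma divmod2 n b : (2 * n + b) %/ s1 = 2 * (n %/ s1) + (2 * (n %% s1) + b) %/ s1 /\
  (2 * n + b) %% s1 = (2 * (n %% s1) + b) %% s1.
Proof.
have En := divn_eq n s1.
move: (n %/ s1) (n %% s1) En => q r ->.
rewrite (_ : 2 * (q * s1 + r) + b = (2 * q) * s1 + (2 * r + b)); last by lia.
by rewrite divnMDl // modnMDl.
Qed.

Lemma St_T n1 n2 b : b < 2 -> St n1 = St n2 -> St (2 * n1 + b) = St (2 * n2 + b).
Proof.
move=> Hb E; have [R W] := St_inv E.
have [D1 M1] := divmod2 n1 b; have [D2 M2] := divmod2 n2 b.
rewrite /St D1 D2 M1 M2 R; congr pair; apply/ffunP => j; rewrite !ffunE.
have Hj := ltn_ord j.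
move: (nat_of_ord j) Hj => j' Hj.
set e := (2 * (n2 %% s1) + b) %/ s1.
have He : e <= 1.
  rewrite /e -ltnS ltn_divLR //; have := ltn_pmod n2 a_pos; lia.
rewrite -(addnA (2 * (n1 %/ s1))) -(addnA (2 * (n2 %/ s1))) !W_upd; try lia.
have Hk : (e + j').+1./2 < 4 by rewrite ltn_half_double; lia.
by rewrite (W _ Hk).
Qed.

Lemma St_O n1 n2 : St n1 = St n2 -> Y n1 = Y n2.
Proof.
move=> E; have [R W] := St_inv E.
have En1 := divn_eq n1 s1; have En2 := divn_eq n2 s1.
have Hr := ltn_pmod n2 a_pos.
rewrite R in En1.
move: (n1 %/ s1) (n2 %/ s1) (n2 %% s1) En1 En2 Hr W => q1 q2 r En1 En2 Hr W.
rewrite /Y.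
have /andP [A1 B1] := M_spec hAP a_pos n1.
move: (MM n1) A1 B1 => m1 A1 B1.
have L1 := P_lb hAP m1; have U1 := P_ub hAP m1.+1.
have Hq1 : q1 <= m1.+1 by nia.
have Hm1 : m1.+1 <= q1 + 2 by nia.
have Hc : m1.+1 = q1 + (m1.+1 - q1) by lia.
move: (m1.+1 - q1) Hc => c Hc.
have Hc4 : c < 4 by lia.
have Hc4' : c.+1 < 4 by lia.
have W1 := W c Hc4; have W2 := W c.+1 Hc4'.
rewrite (_ : 1 <= q1 + c) in W1; last by lia.
rewrite (_ : 1 <= q1 + c.+1) in W2; last by lia.
rewrite (_ : 1 <= q2 + c.+1) in W2; last by lia.
rewrite (_ : q1 + c - 1 = m1) in W1; last by lia.
rewrite (_ : q1 + c.+1 - 1 = m1.+1) in W2; last by lia.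
move: W1; case: ifP => Hq2 W1; last by discriminate W1.
case: W1 => Ht. case: W2 => Ht'.
rewrite (_ : q2 + c.+1 - 1 = (q2 + c - 1).+1) in Ht'; last by lia.
have Hm2 : (q2 + c - 1).+1 = q2 + c by lia.
move: (q2 + c - 1) Hm2 Ht Ht' => m2 Hm2 Ht Ht'.
have F1 := P_form hAP m1; have F1' := P_form hAP m1.+1.
have F2 := P_form hAP m2; have F2' := P_form hAP m2.+1.
rewrite Ht in F1; rewrite Ht' in F1'.
have X1 : s1 * m1.+1 = s1 * q1 + s1 * c by rewrite Hc mulnDr.
have X2 : s1 * m2.+1 = s1 * q2 + s1 * c by rewrite Hm2 mulnDr.
have key : PP m2 <= n2 < PP m2.+1 /\ n2 - PP m2 = n1 - PP m1.
  move: F1 F1' F2 F2' A1 B1; move: (PP m1) (PP m1.+1) (PP m2) (PP m2.+1) => p1 p1' p2 p2'.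
  case: (tm m2); case: (tm m2.+1) => /= F1 F1' F2 F2' A1 B1; split; try lia.
case: key => /andP [K1 K2] K3.
rewrite (M_uniq hAP a_pos (n := n2) (m := m2)); last by rewrite K1 K2.
by rewrite K3 !vtm_code Ht Ht'.
Qed.

End Auto.
Unset Implicit Arguments.

Theorem theorem3 (Delta : finType) (h : 'I_3 -> seq Delta)
  (h_nonempty : exists a : 'I_3, h a != [::])
  (h_AP : size (h (@L3 0 isT)) + size (h (@L3 2 isT)) = 2 * size (h (@L3 1 isT))) :
  (exists y : nat -> Delta, is_morph_image h vtm y) /\
  (forall y : nat -> Delta, is_morph_image h vtm y -> automatic2 y).
Proof.
case: h_nonempty => a Ha.
have a_pos : 0 < size (h (@L3 1 isT)).
  rewrite lt0n; apply/negP => /eqP H0.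
  have H02 : size (h (@L3 0 isT)) = 0 /\ size (h (@L3 2 isT)) = 0 by lia.
  move: Ha; rewrite -size_eq0.
  case: a => [[|[|[|k]]] Hk].
  - by rewrite (_ : Ordinal Hk = @L3 0 isT) ?H02.1 //; apply/val_inj.
  - by rewrite (_ : Ordinal Hk = @L3 1 isT) ?H0 //; apply/val_inj.
  - by rewrite (_ : Ordinal Hk = @L3 2 isT) ?H02.2 //; apply/val_inj.
  - by [].
have [d0 _] : exists d0 : Delta, True.
  by case E: (h a) Ha => [|d l] //; exists d.
have bnd : forall n, n - P h (M h_AP a_pos n) < size (h (vtm (M h_AP a_pos n))).
  move=> n; have /andP [A B] := M_spec h_AP a_pos n.
  move: B; rewrite P_S; lia.
have Hmain : forall y, is_morph_image h vtm y -> forall n, y n = Y h_AP a_pos d0 n.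
  move=> y Hy n; have /andP [_ B] := M_spec h_AP a_pos n.
  rewrite (Hy _ n B) (nth_wm h_AP a_pos (y n) B) /Y.
  exact: set_nth_default (bnd n).
split.
  exists (Y h_AP a_pos d0) => k n Hn.
  rewrite (nth_wm h_AP a_pos _ Hn) /Y.
  exact: set_nth_default (bnd n).
move=> y Hy.
pose S := St h.
pose eps s := epsilon (inhabits 0) (fun n => S n = s).
have epsP : forall n, S (eps (S n)) = S n.
  by move=> n; apply: (epsilon_spec (inhabits 0) (fun m => S m = S n)); exists n.
exists (('I_(size (h (@L3 1 isT))).+1 * {ffun 'I_4 -> option bool})%type : finType).
exists (S 0), (fun s (b : 'I_2) => S (2 * eps s + b)), (fun s => Y h_AP a_pos d0 (eps s)).
have Hfold : forall n, foldl (fun s (b : 'I_2) => S (2 * eps s + b)) (S 0) (base2 n) = S n.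
  elim/ltn_ind => n IH.
  case: n IH => [|n] IH; first by [].
  rewrite base2S // -cats1 foldl_cat /= IH; last first.
    by rewrite ltnS leq_uphalf_double; lia.
  rewrite /S (St_T h_AP a_pos (n1 := eps (S (uphalf n))) (n2 := uphalf n)).
  - congr (S _). have := uphalfK n. rewrite -muln2. by case: (odd n) => /=; lia.
  - by case: (odd n).
  - exact: epsP.
move=> n; rewrite Hfold Hmain //.
symmetry; apply: (St_O h_AP a_pos d0); exact: epsP.
Qed.
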